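(* Let $k\ge 2$, $x_0\in\Sigma_k^*$, and $x_{n+1}=\mathcal P_k(x_n)$. Then there exists $N\ge 0$ such that $|x_n|\le \left\lceil \frac{2k^2}{k-1}\right\rceil$ for all $n\ge N$. Moreover $|x_n|\le \max\left\{|x_0|,\left\lceil \frac{2k^2}{k-1}\right\rceil\right\}$ for all $n\ge 0$. In particular, every fixed point of $\mathcal P_k$, and every word lying on a cycle of $\mathcal P_k$, has length at most $\left\lceil \frac{2k^2}{k-1}\right\rceil$.
   Context: Fix an integer $k\ge 2$ and the alphabet $\Sigma_k=\{0,1,\dots,k-1\}$. A word is a finite nonempty string of letters of $\Sigma_k$ (leading zeros allowed); $\Sigma_k^*$ denotes the set of words. For a word $x$, $|x|$ denotes its length and $|x|_i$ the number of occurrences of the letter $i$ in $x$. For a positive integer $c$, $[c]_k$ denotes its standard base-$k$ representation without leading zeros, viewed as a word over $\Sigma_k$; it has $\lfloor\log_k c\rfloor+1$ letters. The map $\mathcal P_k:\Sigma_k^*\to\Sigma_k^*$ is defined as follows: if $b_1>b_2>\dots>b_r$ are exactly the letters occurring in $x$ (i.e. those with $|x|_{b_j}\neq 0$), then $\mathcal P_k(x)=[|x|_{b_1}]_k\,b_1\,[|x|_{b_2}]_k\,b_2\cdots[|x|_{b_r}]_k\,b_r$ (concatenation). A fixed point is a word $x$ with $\mathcal P_k(x)=x$; a word $x$ lies on a cycle if $\mathcal P_k^{p}(x)=x$ for some $p\ge 1$. *)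

(* Defs.v *)
From mathcomp Require Import all_boot.
Set Implicit Arguments. Unset Strict Implicit. Unset Printing Implicit Defensive.

Definition is_word (k : nat) (x : seq nat) : bool :=
  (size x > 0) && all (fun a => a < k) x.

(* Standard base-k representation (most significant digit first, no leading
   zeros) of c > 0; [fuel] is a recursion bound (fuel = c suffices when k >= 2). *)
Fixpoint digits_aux (k fuel c : nat) : seq nat :=
  match fuel with
  | 0 => [:: c]
  | fuel'.+1 => if c < k then [:: c] else rcons (digits_aux k fuel' (c %/ k)) (c %% k)
  end.

Definition base_rep (k c : nat) : seq nat := digits_aux k c c.

(* P_k(x) = [|x|_{b1}]_k b1 ... [|x|_{br}]_k br over letters b1 > ... > br
   occurring in x. *)
Definition Pk (k : nat) (x : seq nat) : seq nat :=
  flatten [seq base_rep k (count_mem b x) ++ [:: b]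
          | b <- rev (iota 0 k) & count_mem b x != 0].

(* The bound ceil(2k^2/(k-1)) (for k >= 2). *)
Definition bound (k : nat) : nat := (2 * k ^ 2 + (k - 2)) %/ (k - 1).

Example ex1 : base_rep 10 1203 = [:: 1; 2; 0; 3]. Proof. by []. Qed.
Example ex2 : Pk 10 [:: 2;2;1;0;0;0;0;0;0;0;0;0;0] = [:: 2;2;1;1;1;0;0]. Proof. by []. Qed.
Example ex3 : bound 10 = 23. Proof. by []. Qed.
Example ex4 : bound 2 = 8. Proof. by []. Qed.

(* Main.v *)
Require Import Defs.
From mathcomp Require Import all_boot.
From mathcomp Require Import zify.

Lemma kmul_le_exp k m : 2 <= k -> k * m <= k ^ m.
Proof.
move=> hk; elim: m => [|m IH]; first by rewrite muln0 expn0.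
rewrite expnS mulnS.
case: m IH => [|m] IH; first by rewrite muln0 expn0 addn0 muln1.
have h1 : k <= k ^ m.+1.
  by rewrite -{1}(expn1 k) leq_pexp2l // ltnW.
nia.
Qed.

Lemma digits_pow k fuel c : 2 <= k ->
  k ^ (size (digits_aux k fuel c)).-1 <= maxn c 1.
Proof.
move=> hk; elim: fuel c => [|f IH] c /=; first by rewrite expn0 leq_maxr.
case: ifP => hc /=; first by rewrite expn0 leq_maxr.
rewrite size_rcons /=.
have := IH (c %/ k).
have hck : k <= c by rewrite leqNgt hc.
have hd : 1 <= c %/ k by rewrite divn_gt0 // ltnW.
have -> : maxn (c %/ k) 1 = c %/ k by apply/maxn_idPl.
move=> H.
case E: (size (digits_aux k f (c %/ k))) => [|s].
  lia.
rewrite E /= in H.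
have -> : maxn c 1 = c by apply/maxn_idPl; lia.
rewrite expnS.
have : k * (c %/ k) <= c by rewrite mulnC leq_trunc_div.
nia.
Qed.

Lemma digits_size k fuel c : 2 <= k ->
  k * size (digits_aux k fuel c) <= k + maxn c 1.
Proof.
move=> hk.
have H := digits_pow k fuel c hk.
have H2 := kmul_le_exp k (size (digits_aux k fuel c)).-1 hk.
case E: (size (digits_aux k fuel c)) => [|s]; first by rewrite muln0.
rewrite E /= in H H2.
rewrite mulnS. nia.
Qed.

Lemma sum_count_le k x :
  \sum_(b <- iota 0 k) count_mem b x <= size x.
Proof.
elim: x => [|a x IH] /=.
  by rewrite big1_seq.
rewrite big_split /=.
have : \sum_(b <- iota 0 k) (a == b) <= 1.
  rewrite big_mkcond /=.
  rewrite -(big_mkcond (fun b => a == b) (fun _ => 1)) sum1_count.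
  have -> : count (fun b => a == b) (iota 0 k) = count_mem a (iota 0 k).
    by apply: eq_count => b /=; rewrite eq_sym.
  by rewrite count_uniq_mem ?iota_uniq // leq_b1.
move=> h; rewrite -addn1 addnC; exact: leq_add.
Qed.

Lemma Pk_size k x : 2 <= k -> k * size (Pk k x) <= 2 * k ^ 2 + size x.
Proof.
move=> hk.
rewrite /Pk size_flatten sumnE /shape -map_comp big_map big_filter.
rewrite big_distrr /=.
apply: (@leq_trans (\sum_(b <- rev (iota 0 k)) (2 * k + count_mem b x))).
  rewrite [X in _ <= X](bigID (fun b => count_mem b x != 0)) /=.
  apply: leq_trans (leq_addr _ _).
  apply: leq_sum => b hb.
  rewrite /= size_cat /= /base_rep mulnDr muln1.
  have := digits_size k (count_mem b x) (count_mem b x) hk.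
  have : maxn (count_mem b x) 1 = count_mem b x.
    by apply/maxn_idPl; rewrite lt0n.
  move=> -> H; apply: leq_trans (leq_add H (leqnn k)) _; rewrite addnAC mul2n -addnn //.
rewrite big_rev big_split /=.
have h := sum_count_le k x.
have -> : iota 0 k = index_iota 0 k by rewrite /index_iota subn0.
rewrite sum_nat_const_nat subn0.
apply: leq_add; first by rewrite mulnC expnS expn1 mulnA.
by rewrite /index_iota subn0.
Qed.

Lemma bound_prop k : 2 <= k -> 2 * k ^ 2 <= bound k * (k - 1).
Proof.
move=> hk; rewrite /bound.
have e := divn_eq (2 * k ^ 2 + (k - 2)) (k - 1).
have r := ltn_pmod (2 * k ^ 2 + (k - 2)) (_ : 0 < k - 1).
have r' : (2 * k ^ 2 + (k - 2)) %% (k - 1) < k - 1 by apply: r; lia.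
lia.
Qed.

Lemma step k x : 2 <= k -> size (Pk k x) <= maxn (size x - 1) (bound k).
Proof.
move=> hk.
have h1 := Pk_size k x hk.
have h2 := bound_prop k hk.
set P := size (Pk k x) in h1 *; set L := size x in h1 *; set B := bound k in h2 *.
case: (leqP L B) => hL.
  have : k * P <= k * B by nia.
  rewrite leq_pmul2l; last lia. lia.
have : k * P < k * L by nia.
rewrite ltn_pmul2l; last lia. lia.
Qed.

Lemma iter_bound k x n : 2 <= k ->
  size (iter n (Pk k) x) <= maxn (size x - n) (bound k).
Proof.
move=> hk; elim: n => [|n IH] /=; first by rewrite subn0 leq_maxl.
have := step k (iter n (Pk k) x) hk.
lia.
Qed.

Theorem mainTheorem3 (k : nat) (x0 : seq nat) :
  2 <= k -> is_word k x0 ->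
  (exists N, forall n, N <= n -> size (iter n (Pk k) x0) <= bound k) /\
  (forall n, size (iter n (Pk k) x0) <= maxn (size x0) (bound k)) /\
  (Pk k x0 = x0 -> size x0 <= bound k) /\
  ((exists p, 0 < p /\ iter p (Pk k) x0 = x0) -> size x0 <= bound k).
Proof.
move=> hk _; split; [|split; [|split]].
- exists (size x0) => n hn; have := iter_bound k x0 n hk; lia.
- move=> n; have := iter_bound k x0 n hk; lia.
- move=> hf; have := iter_bound k x0 1 hk; rewrite /= hf; lia.
- case=> p [hp hf]; have := iter_bound k x0 p hk; rewrite hf; lia.
Qed.
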